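(* In the single-component setting, suppose $\sigma\le\frac{4\sqrt2}{\sqrt\pi}$ and $\gamma^\star_\sigma\le\min\{1,\frac1{4\sqrt\rho}\}$, where $\gamma^\star_\sigma=\sigma^2+\sigma\sqrt{2\log\frac{4\sqrt2}{\sqrt\pi\sigma}}$. Then $\frac{\partial}{\partial\sigma}L(w)\ge p(0)\Big(\frac{\sigma}{11}\int_0^\infty\exp\big((|s(0)|-\frac{\sqrt\rho}4-1)\delta-\frac\rho2\delta^2\big)d\delta-2\sqrt2\exp\big(\frac{s(0)^2}{\nu+\sigma^{-2}}\big)\frac1{\sqrt{\nu+\sigma^{-2}}}\Big)$.
   Context: Single-component setting: $y$ uniform on $\{\pm1\}$; $x=(x_1,x_2)$, $x_1\in\mathbb{R}^{d_1}$, $x_2\sim\mathcal{N}(0,\Sigma_2)$ with $\Sigma_2\succ0$ independent of $x_1$. $\ell_{exp}(t)=\exp(-|t|)$, $L(w)=\mathbb{E}[\ell_{exp}(w^\top x)]$. For fixed $w=(w_1,w_2)$: $\sigma=\sqrt{w_2^\top\Sigma_2w_2}$; $p$ is the density of $\mu=w_1^\top x_1$, assumed such that $\log p$ is differentiable, $\nu$-strongly concave and $\rho$-smooth (i.e. $-\rho\le(\log p)''\le-\nu$) for some $0<\nu\le\rho$; $s(\mu)=\frac{p'(\mu)}{p(\mu)}$. $L(w)=\mathbb{E}_\mu[g_\sigma(\mu)]$ with $g_\sigma(\mu)=\mathbb{E}_{Z\sim\mathcal{N}(0,1)}[\ell_{exp}(\mu+\sigma Z)]$, and $\frac{\partial}{\partial\sigma}L(w)=\mathbb{E}_\mu[\frac{\partial}{\partial\sigma}g_\sigma(\mu)]$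 denotes the derivative with respect to $\sigma$ with the law of $\mu$ held fixed. *)

(* Defs.v *)
From Stdlib Require Import Reals.
From Coquelicot Require Import Coquelicot.
Open Scope R_scope.

Definition ell_exp (t : R) : R := exp (- Rabs t).

Definition std_normal_pdf (z : R) : R := exp (- z ^ 2 / 2) / sqrt (2 * PI).

Definition int_R (f : R -> R) : R :=
  RInt_gen f (Rbar_locally m_infty) (Rbar_locally p_infty).

Definition int_0_inf (f : R -> R) : R :=
  RInt_gen f (at_point 0) (Rbar_locally p_infty).

(* g_sigma(mu) = E_{Z ~ N(0,1)} [ l_exp(mu + sigma Z) ] *)
Definition g_sig (sigma mu : R) : R :=
  int_R (fun z => std_normal_pdf z * ell_exp (mu + sigma * z)).

(* d/dsigma L(w) := E_mu [ d/dsigma g_sigma(mu) ], law of mu (density p) fixed *)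
Definition dL_dsigma (p : R -> R) (sigma : R) : R :=
  int_R (fun mu => p mu * Derive (fun t => g_sig t mu) sigma).

Definition score (p : R -> R) (x : R) : R := Derive p x / p x.

Definition gamma_star (sigma : R) : R :=
  sigma ^ 2 + sigma * sqrt (2 * ln (4 * sqrt 2 / (sqrt PI * sigma))).

(* Main.v *)
Require Import Defs.
From Stdlib Require Import Reals Lra.
From Coquelicot Require Import Coquelicot.
Open Scope R_scope.

Lemma gen_of_lim (f : R -> R) Fa Fb (l : R) :
  (forall a b, ex_RInt f a b) ->
  filterlim (fun ab => RInt f (fst ab) (snd ab)) (filter_prod Fa Fb) (locally l) ->
  is_RInt_gen f Fa Fb l.
Proof.
  intros Hex Hl P HP.
  specialize (Hl P HP). destruct Hl as [Q R0 HQ HR H].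
  exists Q R0; auto. intros x y Qx Ry.
  exists (RInt f x y); split. exact (RInt_correct f x y (Hex x y)). apply (H x y Qx Ry).
Qed.

Lemma lim_of_gen (f : R -> R) Fa Fb (l : R) :
  (forall a b, ex_RInt f a b) -> is_RInt_gen f Fa Fb l ->
  filterlim (fun ab => RInt f (fst ab) (snd ab)) (filter_prod Fa Fb) (locally l).
Proof.
  intros Hex Hl P HP.
  specialize (Hl P HP). destruct Hl as [Q R0 HQ HR H].
  exists Q R0; auto. intros x y Qx Ry.
  destruct (H x y Qx Ry) as [z [Hz Pz]]. simpl in *.
  unfold filtermap; simpl. replace (RInt f x y) with z. exact Pz.
  symmetry; apply is_RInt_unique; exact Hz.
Qed.

Lemma abs_RInt_dom (f g : R -> R) a b :
  ex_RInt f a b -> ex_RInt g a b ->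
  (forall x, Rmin a b <= x <= Rmax a b -> Rabs (f x) <= g x) ->
  Rabs (RInt f a b) <= Rabs (RInt g a b).
Proof.
  intros Hf Hg Hd.
  assert (K : forall a b, a <= b -> ex_RInt f a b -> ex_RInt g a b ->
     (forall x, a <= x <= b -> Rabs (f x) <= g x) ->
     Rabs (RInt f a b) <= Rabs (RInt g a b)).
  { clear a b Hf Hg Hd. intros a b Hab Hf Hg Hd.
    apply Rle_trans with (RInt (fun t => Rabs (f t)) a b).
    apply abs_RInt_le; auto.
    apply Rle_trans with (RInt g a b).
    - apply RInt_le; auto. apply ex_RInt_norm; auto. intros x Hx; apply Hd; lra.
    - apply Rle_abs. }
  destruct (Rle_or_lt a b) as [H|H].
  apply K; auto. rewrite Rmin_left, Rmax_right in Hd; auto.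
  assert (Hf' : ex_RInt f b a) by (apply ex_RInt_swap; auto).
  assert (Hg' : ex_RInt g b a) by (apply ex_RInt_swap; auto).
  rewrite <- (opp_RInt_swap f b a Hf'), <- (opp_RInt_swap g b a Hg').
  unfold opp; simpl. rewrite !Rabs_Ropp. apply K; auto. lra.
  rewrite Rmin_right, Rmax_left in Hd; try lra. auto.
Qed.

Lemma between3 u v w x : Rmin u v <= x <= Rmax u v ->
  (Rmin u w <= x <= Rmax u w) \/ (Rmin v w <= x <= Rmax v w).
Proof.
  unfold Rmin, Rmax; intros H; destruct (Rle_dec u v), (Rle_dec u w), (Rle_dec v w);
  destruct (Rle_or_lt x w); try (left; split; lra); try (right; split; lra).
Qed.

Lemma dom_ex (f g : R -> R) Fa Fb lg :
  ProperFilter Fa -> ProperFilter Fb ->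
  (forall a b, ex_RInt f a b) -> (forall a b, ex_RInt g a b) ->
  filter_prod Fa Fb (fun ab => forall x, Rmin (fst ab) (snd ab) <= x <= Rmax (fst ab) (snd ab) -> Rabs (f x) <= g x) ->
  is_RInt_gen g Fa Fb lg ->
  ex_RInt_gen f Fa Fb.
Proof.
  intros PFa PFb Hf Hg Hd Hl.
  pose proof (lim_of_gen g Fa Fb lg Hg Hl) as Lg.
  destruct Hd as [Qd Rd HQd HRd Hd].
  assert (E : exists y, filterlim (fun ab => RInt f (fst ab) (snd ab)) (filter_prod Fa Fb) (locally y)).
  { apply filterlim_locally_cauchy. intros eps.
    assert (Hb : 0 < eps / 4) by (destruct eps; simpl; lra).
    destruct (Lg _ (locally_ball lg (mkposreal _ Hb))) as [Q R0 HQ HR H].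
    exists (fun ab => (Q (fst ab) /\ Qd (fst ab)) /\ (R0 (snd ab) /\ Rd (snd ab))). split.
    exists (fun x => Q x /\ Qd x) (fun y => R0 y /\ Rd y); auto. apply filter_and; auto. apply filter_and; auto.
    intros [a b] [a' b'] [[Qa Qda] [Rb Rdb]] [[Qa' Qda'] [Rb' Rdb']]; simpl in *.
    pose proof (H a b Qa Rb) as H1. pose proof (H a' b Qa' Rb) as H2.
    pose proof (H a' b' Qa' Rb') as H3. pose proof (H a b' Qa Rb') as H4.
    unfold filtermap, ball in H1,H2,H3,H4; simpl in *. unfold AbsRing_ball, abs, minus, plus, opp in *; simpl in *.
    change (ball (RInt f a b) eps (RInt f a' b')).
    unfold ball; simpl; unfold AbsRing_ball, abs, minus, plus, opp; simpl.
    rewrite <- (RInt_Chasles f a a' b) by auto.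
    rewrite <- (RInt_Chasles f a' b b') by auto.
    rewrite <- (RInt_Chasles g a a' b) in H1 by auto.
    rewrite <- (RInt_Chasles g a' b b') in H3 by auto.
    unfold plus in *; simpl in *.
    assert (D1 : forall x, Rmin a a' <= x <= Rmax a a' -> Rabs (f x) <= g x).
    { intros x Hx. pose proof (Hd a b Qda Rdb x) as X1. pose proof (Hd a' b Qda' Rdb x) as X2.
      simpl in X1, X2. destruct (between3 a a' b x Hx); [apply X1|apply X2]; auto. }
    assert (D2 : forall x, Rmin b b' <= x <= Rmax b b' -> Rabs (f x) <= g x).
    { intros x Hx. pose proof (Hd a' b Qda' Rdb x) as X1. pose proof (Hd a' b' Qda' Rdb' x) as X2.
      simpl in X1, X2. destruct (between3 b b' a' x Hx) as [K|K]; [apply X1|apply X2];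
      rewrite Rmin_comm, Rmax_comm; auto. }
    pose proof (abs_RInt_dom f g a a' (Hf _ _) (Hg _ _) D1).
    pose proof (abs_RInt_dom f g b b' (Hf _ _) (Hg _ _) D2).
    destruct eps as [e he]; simpl in *.
    revert H0 H5 H1 H2 H3.
    generalize (RInt f a a') (RInt f a' b) (RInt f b b') (RInt g a a') (RInt g a' b) (RInt g b b').
    intros.
    unfold Rabs in *; repeat destruct Rcase_abs; lra. }
  destruct E as [y Hy]. exists y. apply gen_of_lim; auto.
Qed.

Lemma fp_all Fa Fb (P : R * R -> Prop) : Filter Fa -> Filter Fb -> (forall ab, P ab) -> filter_prod Fa Fb P.
Proof. intros. apply (@filter_forall _ (filter_prod Fa Fb) (filter_prod_filter _ _ Fa Fb _ _)); auto. Qed.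


Lemma gen_zero Fa Fb : Filter Fa -> Filter Fb -> is_RInt_gen (fun _ : R => 0) Fa Fb 0.
Proof.
  intros FFa FFb P HP. 
  apply (@filter_forall _ (filter_prod Fa Fb) (filter_prod_filter _ _ Fa Fb FFa FFb)). intros [a b]. exists 0. split.
  - pose proof (is_RInt_const a b 0). unfold scal in H; simpl in H. unfold mult in H; simpl in H.
    rewrite Rmult_0_r in H. exact H.
  - apply locally_singleton; auto.
Qed.

Lemma gen_nonneg (f : R -> R) Fa Fb l : ProperFilter Fa -> ProperFilter Fb ->
  filter_prod Fa Fb (fun ab => fst ab <= snd ab /\ forall x, fst ab <= x <= snd ab -> 0 <= f x) ->
  is_RInt_gen f Fa Fb l -> 0 <= l.
Proof.
  intros PFa PFb Hp Hl.
  assert (Z : is_RInt_gen (fun _ : R => 0) Fa Fb 0) by (apply gen_zero; apply PFa || apply PFb).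
  pose proof (@RInt_gen_norm R_CompleteNormedModule Fa Fb PFa PFb (fun _ : R => 0) f 0 l) as H.
  assert (N : forall x : R, norm x = Rabs x) by reflexivity.
  rewrite N, Rabs_R0 in H. apply H; auto.
  - eapply filter_imp; [|exact Hp]. intros [a b] [H1 H2]; exact H1.
  - eapply filter_imp; [|exact Hp]. intros [a b] [H1 H2] x Hx. rewrite N, Rabs_R0. apply H2; auto.
Qed.

Lemma gen_le (f g : R -> R) Fa Fb lf lg : ProperFilter Fa -> ProperFilter Fb ->
  filter_prod Fa Fb (fun ab => fst ab <= snd ab /\ forall x, fst ab <= x <= snd ab -> f x <= g x) ->
  is_RInt_gen f Fa Fb lf -> is_RInt_gen g Fa Fb lg -> lf <= lg.
Proof.
  intros PFa PFb Hp Hf Hg.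
  pose proof (is_RInt_gen_minus g f lg lf Hg Hf) as H.
  apply gen_nonneg in H; auto.
  - unfold minus, plus, opp in H; simpl in H; lra.
  - eapply filter_imp; [|exact Hp]. intros [a b] [H1 H2]; split; auto.
    intros x Hx; specialize (H2 x Hx). unfold minus, plus, opp; simpl; lra.
Qed.

Lemma fp_R (P : R -> Prop) : (forall x, P x) ->
  filter_prod (Rbar_locally m_infty) (Rbar_locally p_infty)
    (fun ab => fst ab <= snd ab /\ forall x, fst ab <= x <= snd ab -> P x).
Proof.
  intros H. exists (fun x => x < 0) (fun y => y > 0).
  exists 0; auto. exists 0; auto.
  intros x y Hx Hy; simpl; split. lra. auto.
Qed.

Lemma fp_up (P : R -> Prop) a : (forall x, a <= x -> P x) ->
  filter_prod (at_point a) (Rbar_locally p_infty)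
    (fun ab => fst ab <= snd ab /\ forall x, fst ab <= x <= snd ab -> P x).
Proof.
  intros H. exists (fun x => x = a) (fun y => y > a).
  reflexivity. exists a; auto.
  intros x y Hx Hy; simpl; subst; split. lra. intros z Hz; apply H; lra.
Qed.

Lemma fp_down (P : R -> Prop) a : (forall x, x <= a -> P x) ->
  filter_prod (Rbar_locally m_infty) (at_point a)
    (fun ab => fst ab <= snd ab /\ forall x, fst ab <= x <= snd ab -> P x).
Proof.
  intros H. exists (fun x => x < a) (fun y => y = a).
  exists a; auto. reflexivity.
  intros x y Hx Hy; simpl; subst; split. lra. intros z Hz; apply H; lra.
Qed.


Lemma RInt_shift (f : R -> R) c x y : ex_RInt f (x + c) (y + c) ->
  RInt (fun z => f (z + c)) x y = RInt f (x + c) (y + c).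
Proof.
  intros H. pose proof (RInt_comp_lin f 1 c x y) as E.
  rewrite !Rmult_1_l in E. rewrite <- E by auto.
  apply RInt_ext. intros; unfold scal; simpl; unfold mult; simpl. rewrite Rmult_1_l, Rmult_1_l. reflexivity.
Qed.

Lemma ex_RInt_shift (f : R -> R) c x y : ex_RInt f (x + c) (y + c) ->
  ex_RInt (fun z => f (z + c)) x y.
Proof.
  intros H. pose proof (ex_RInt_comp_lin f 1 c x y) as E.
  rewrite !Rmult_1_l in E. specialize (E H).
  eapply ex_RInt_ext; [|exact E]. intros; unfold scal; simpl; unfold mult; simpl. rewrite !Rmult_1_l. reflexivity.
Qed.

Lemma gen_shift_up (f : R -> R) (a c l : R) : (forall a b, ex_RInt f a b) ->
  is_RInt_gen f (at_point a) (Rbar_locally p_infty) l ->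
  is_RInt_gen (fun z => f (z + c)) (at_point (a - c)) (Rbar_locally p_infty) l.
Proof.
  intros Hex Hl. apply lim_of_gen in Hl; auto.
  apply gen_of_lim. intros; apply ex_RInt_shift; auto.
  eapply filterlim_ext.
  2: eapply filterlim_comp with (f := fun ab => (fst ab + c, snd ab + c)) (G := filter_prod (at_point a) (Rbar_locally p_infty)).
  3: exact Hl.
  intros [x y]; simpl. symmetry; apply RInt_shift; auto.
  intros P [Q R0 HQ HR H]. destruct HR as [M HM].
  exists (fun x => x = a - c) (fun y => y > M - c). reflexivity. exists (M - c); auto.
  intros x y -> Hy. simpl. replace (a - c + c) with a by (simpl; ring). apply H. exact HQ. apply HM. lra.
Qed.

Lemma gen_shift_down (f : R -> R) (a c l : R) : (forall a b, ex_RInt f a b) ->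
  is_RInt_gen f (Rbar_locally m_infty) (at_point a) l ->
  is_RInt_gen (fun z => f (z + c)) (Rbar_locally m_infty) (at_point (a - c)) l.
Proof.
  intros Hex Hl. apply lim_of_gen in Hl; auto.
  apply gen_of_lim. intros; apply ex_RInt_shift; auto.
  eapply filterlim_ext.
  2: eapply filterlim_comp with (f := fun ab => (fst ab + c, snd ab + c)) (G := filter_prod (Rbar_locally m_infty) (at_point a)).
  3: exact Hl.
  intros [x y]; simpl. symmetry; apply RInt_shift; auto.
  intros P [Q R0 HQ HR H]. destruct HQ as [M HM].
  exists (fun y => y < M - c) (fun x => x = a - c). exists (M - c); auto. reflexivity.
  intros x y Hx ->. simpl. replace (a - c + c) with a by (simpl; ring). apply H. apply HM. lra. exact HR.
Qed.

Lemma RInt_refl (f : R -> R) x y : ex_RInt f (- y) (- x) ->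
  RInt (fun z => f (- z)) x y = RInt f (- y) (- x).
Proof.
  intros H. apply is_RInt_unique.
  pose proof (is_RInt_swap f (-x) (-y) _ (RInt_correct f _ _ H)) as Hs.
  pose proof (is_RInt_opp _ _ _ _ Hs) as Ho.
  pose proof (is_RInt_comp_opp _ x y _ Ho) as H2.
  rewrite opp_opp in H2. eapply is_RInt_ext; [|exact H2]. intros; unfold opp; simpl; ring.
  Unshelve. all: fail.
Qed.

Lemma gen_refl (f : R -> R) l : (forall a b, ex_RInt f a b) ->
  is_RInt_gen f (at_point 0) (Rbar_locally p_infty) l ->
  is_RInt_gen (fun z => f (- z)) (Rbar_locally m_infty) (at_point 0) l.
Proof.
  intros Hex Hl. apply lim_of_gen in Hl; auto.
  apply gen_of_lim.
  { intros a b. apply ex_RInt_swap.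
    apply (ex_RInt_ext (fun z => opp (opp (f (- z))))). intros; unfold opp; simpl; ring.
    apply (ex_RInt_opp (V := R_NormedModule)). apply (ex_RInt_comp_opp (V := R_NormedModule)). apply Hex. }
  eapply filterlim_ext.
  2: eapply filterlim_comp with (f := fun ab => (- snd ab, - fst ab)) (G := filter_prod (at_point 0) (Rbar_locally p_infty)).
  3: exact Hl.
  intros [x y]; simpl. symmetry; apply RInt_refl; auto.
  intros P [Q R0 HQ HR H]. destruct HR as [M HM].
  exists (fun y => y < - M) (fun x => x = 0). exists (- M); auto. reflexivity.
  intros x y Hx ->. simpl. rewrite Ropp_0. apply H. exact HQ. apply HM. lra.
Qed.


Lemma fp_strict Fa Fb (P : R -> Prop) : Filter Fa -> Filter Fb ->
  filter_prod Fa Fb (fun ab => fst ab <= snd ab /\ forall x, fst ab <= x <= snd ab -> P x) ->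
  filter_prod Fa Fb (fun ab => forall x, Rmin (fst ab) (snd ab) < x < Rmax (fst ab) (snd ab) -> P x).
Proof.
  intros FFa FFb H. eapply filter_imp; [|exact H].
  intros [a b] [H1 H2] x Hx; simpl in *. rewrite Rmin_left, Rmax_right in Hx by auto.
  apply H2; lra.
Qed.

Lemma exp_tail_up (c k m : R) : 0 < k ->
  is_RInt_gen (fun x => exp (c - k * (x - m))) (at_point m) (Rbar_locally p_infty) (exp c / k).
Proof.
  intros hk.
  set (F := fun x => - exp (c - k * (x - m)) / k).
  assert (DF : forall x, is_derive F x (exp (c - k * (x - m)))).
  { intros x. unfold F. auto_derive. auto. unfold Rminus. field. lra. }
  assert (E : forall x, Derive F x = exp (c - k * (x - m))).
  { intros x; apply is_derive_unique, DF. }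
  replace (exp c / k) with (0 - (- exp c / k)) by (field; lra).
  eapply is_RInt_gen_ext.
  2: apply (is_RInt_gen_Derive F).
  - apply fp_strict. apply at_point_filter. apply Rbar_locally_filter.
    apply fp_up. intros; apply E.
  - apply filter_forall. intros [a b] x _. eexists; apply DF.
  - apply filter_forall. intros [a b] x _. eapply continuous_ext.
    intros; symmetry; apply E. apply (continuous_comp (fun x => c - k * (x - m)) exp).
    apply @continuous_minus. apply continuous_const. apply @continuous_scal_r.
    apply @continuous_minus. apply continuous_id. apply continuous_const.
    apply continuous_exp.
  - intros P HP. unfold filtermap, at_point. unfold F. replace (m - m) with 0 by ring.
    rewrite Rmult_0_r, Rminus_0_r. apply locally_singleton. exact HP.
  - apply filterlim_locally. intros eps.
    assert (He : 0 < eps * k) by (destruct eps; simpl; nra).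
    exists (m + (c - ln (eps * k)) / k). intros x Hx.
    unfold ball; simpl; unfold AbsRing_ball, abs, minus, plus, opp; simpl.
    unfold F. rewrite Ropp_0, Rplus_0_r.
    assert (h1 : c - k * (x - m) < ln (eps * k)).
    { apply (Rmult_lt_compat_l k) in Hx; auto.
      replace (k * (m + (c - ln (eps * k)) / k)) with (k * m + (c - ln (eps * k))) in Hx by (field; lra).
      lra. }
    apply exp_increasing in h1. rewrite exp_ln in h1 by auto.
    pose proof (exp_pos (c - k * (x - m))) as hp.
    assert (h2 : exp (c - k * (x - m)) / k < eps).
    { apply Rmult_lt_reg_r with k; auto. unfold Rdiv. rewrite Rmult_assoc, Rinv_l, Rmult_1_r; lra. }
    assert (h3 : 0 < exp (c - k * (x - m)) / k) by (apply Rdiv_lt_0_compat; auto).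
    replace (- exp (c - k * (x - m)) / k) with (- (exp (c - k * (x - m)) / k)) by (field; lra).
    rewrite Rabs_Ropp, Rabs_pos_eq; lra.
Qed.

Lemma exp_tail_down (c k m : R) : 0 < k ->
  is_RInt_gen (fun x => exp (c + k * (x - m))) (Rbar_locally m_infty) (at_point m) (exp c / k).
Proof.
  intros hk.
  set (F := fun x => exp (c + k * (x - m)) / k).
  assert (DF : forall x, is_derive F x (exp (c + k * (x - m)))).
  { intros x. unfold F. auto_derive. auto. unfold Rminus. field. lra. }
  assert (E : forall x, Derive F x = exp (c + k * (x - m))).
  { intros x; apply is_derive_unique, DF. }
  replace (exp c / k) with (exp c / k - 0) by ring.
  eapply is_RInt_gen_ext.
  2: apply (is_RInt_gen_Derive F).
  - apply fp_strict. apply Rbar_locally_filter. apply at_point_filter.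
    apply fp_down. intros; apply E.
  - apply filter_forall. intros [a b] x _. eexists; apply DF.
  - apply filter_forall. intros [a b] x _. eapply continuous_ext.
    intros; symmetry; apply E. apply (continuous_comp (fun x => c + k * (x - m)) exp).
    apply @continuous_plus. apply continuous_const. apply @continuous_scal_r.
    apply @continuous_minus. apply continuous_id. apply continuous_const.
    apply continuous_exp.
  - apply filterlim_locally. intros eps.
    assert (He : 0 < eps * k) by (destruct eps; simpl; nra).
    exists (m + (ln (eps * k) - c) / k). intros x Hx.
    unfold ball; simpl; unfold AbsRing_ball, abs, minus, plus, opp; simpl.
    unfold F. rewrite Ropp_0, Rplus_0_r.
    assert (h1 : c + k * (x - m) < ln (eps * k)).
    { apply (Rmult_lt_compat_l k) in Hx; auto.
      replace (k * (m + (ln (eps * k) - c) / k)) with (k * m + (ln (eps * k) - c)) in Hx by (field; lra).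
      lra. }
    apply exp_increasing in h1. rewrite exp_ln in h1 by auto.
    pose proof (exp_pos (c + k * (x - m))) as hp.
    assert (h2 : exp (c + k * (x - m)) / k < eps).
    { apply Rmult_lt_reg_r with k; auto. unfold Rdiv. rewrite Rmult_assoc, Rinv_l, Rmult_1_r; lra. }
    assert (h3 : 0 < exp (c + k * (x - m)) / k) by (apply Rdiv_lt_0_compat; auto).
    rewrite Rabs_pos_eq; lra.
  - intros P HP. unfold filtermap, at_point. unfold F. replace (m - m) with 0 by ring.
    rewrite Rmult_0_r, Rplus_0_r. apply locally_singleton. exact HP.
Qed.

Lemma exp_abs_int (c k m : R) : 0 < k ->
  is_RInt_gen (fun x => exp (c - k * Rabs (x - m))) (Rbar_locally m_infty) (Rbar_locally p_infty) (2 * exp c / k).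
Proof.
  intros hk. replace (2 * exp c / k) with (plus (exp c / k) (exp c / k)) by (unfold plus; simpl; field; lra).
  apply (is_RInt_gen_Chasles (V := R_NormedModule) _ m).
  - eapply is_RInt_gen_ext. 2: apply exp_tail_down; auto.
    apply fp_strict. apply Rbar_locally_filter. apply at_point_filter.
    apply fp_down. intros x hx. rewrite Rabs_left1 by lra. f_equal; ring.
  - eapply is_RInt_gen_ext. 2: apply exp_tail_up; auto.
    apply fp_strict. apply at_point_filter. apply Rbar_locally_filter.
    apply fp_up. intros x hx. rewrite Rabs_pos_eq by lra. reflexivity.
Qed.

Lemma fp_down_s (P : R -> Prop) a : (forall x, x < a -> P x) ->
  filter_prod (Rbar_locally m_infty) (at_point a)
    (fun ab => forall x, Rmin (fst ab) (snd ab) < x < Rmax (fst ab) (snd ab) -> P x).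
Proof.
  intros H. exists (fun x => x < a) (fun y => y = a).
  exists a; auto. reflexivity.
  intros x y Hx Hy z; simpl; subst. rewrite Rmin_left, Rmax_right by lra. intros; apply H; lra.
Qed.

Lemma fp_up_s (P : R -> Prop) a : (forall x, a < x -> P x) ->
  filter_prod (at_point a) (Rbar_locally p_infty)
    (fun ab => forall x, Rmin (fst ab) (snd ab) < x < Rmax (fst ab) (snd ab) -> P x).
Proof.
  intros H. exists (fun x => x = a) (fun y => y > a).
  reflexivity. exists a; auto.
  intros x y Hx Hy z; simpl; subst. rewrite Rmin_left, Rmax_right by lra. intros; apply H; lra.
Qed.


Notation phi := std_normal_pdf.

Lemma PI_gt3 : 3 < PI.
Proof. pose proof PI2_3_2. lra. Qed.

Lemma sq2pi_ge1 : 1 <= sqrt (2 * PI).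
Proof. rewrite <- sqrt_1. apply sqrt_le_1_alt. pose proof PI_gt3; lra. Qed.

Lemma sq2pi_pos : 0 < sqrt (2 * PI).
Proof. pose proof sq2pi_ge1; lra. Qed.

Lemma phi_pos z : 0 < phi z.
Proof. unfold std_normal_pdf. apply Rdiv_lt_0_compat. apply exp_pos. apply sq2pi_pos. Qed.

Lemma phi_le z : phi z <= exp (- z ^ 2 / 2).
Proof.
  unfold std_normal_pdf. pose proof sq2pi_ge1. pose proof (exp_pos (- z ^ 2 / 2)).
  apply Rmult_le_reg_r with (sqrt (2 * PI)). lra.
  unfold Rdiv; rewrite Rmult_assoc, Rinv_l by lra. nra.
Qed.

Lemma exp_mono x y : x <= y -> exp x <= exp y.
Proof. intros [H|H]. apply Rlt_le, exp_increasing; auto. subst; lra. Qed.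

Lemma phi_le1 z : phi z <= 1.
Proof.
  eapply Rle_trans. apply phi_le. rewrite <- exp_0. apply exp_mono.
  pose proof (pow2_ge_0 z). lra.
Qed.

Lemma phi_cont z : continuous phi z.
Proof.
  apply (@ex_derive_continuous R_AbsRing R_NormedModule). unfold std_normal_pdf. auto_derive. pose proof sq2pi_pos; lra.
Qed.

Lemma exR_cont (f : R -> R) : (forall x, continuous f x) -> forall a b, ex_RInt f a b.
Proof. intros H a b. apply (ex_RInt_continuous (V := R_CompleteNormedModule)). intros; apply H. Qed.

Lemma phi_ex a b : ex_RInt phi a b.
Proof. apply exR_cont. intros; apply phi_cont. Qed.

Lemma cont_expaff (c k : R) x : continuous (fun x => exp (c + k * x)) x.
Proof.
  apply (@ex_derive_continuous R_AbsRing R_NormedModule). auto_derive. auto.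
Qed.

Lemma phi_up_ex a : ex_RInt_gen phi (at_point a) (Rbar_locally p_infty).
Proof.
  apply (dom_ex phi (fun x => exp ((1/2 - a) - 1 * (x - a))) _ _ (exp (1/2 - a) / 1)).
  apply at_point_filter. apply Rbar_locally_filter.
  apply phi_ex.
  apply exR_cont. intros x. eapply continuous_ext. 2: apply (cont_expaff (1/2) (-1)).
  intros; simpl; f_equal; ring.
  apply fp_all. apply at_point_filter. apply Rbar_locally_filter.
  intros ab x _. rewrite Rabs_pos_eq by (apply Rlt_le, phi_pos).
  eapply Rle_trans. apply phi_le. apply exp_mono. pose proof (pow2_ge_0 (x - 1)). nra.
  apply exp_tail_up. lra.
Qed.

Lemma phi_down_ex a : ex_RInt_gen phi (Rbar_locally m_infty) (at_point a).
Proof.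
  apply (dom_ex phi (fun x => exp ((1/2 + a) + 1 * (x - a))) _ _ (exp (1/2 + a) / 1)).
  apply Rbar_locally_filter. apply at_point_filter.
  apply phi_ex.
  apply exR_cont. intros x. eapply continuous_ext. 2: apply (cont_expaff (1/2) 1).
  intros; simpl; f_equal; ring.
  apply fp_all. apply Rbar_locally_filter. apply at_point_filter.
  intros ab x _. rewrite Rabs_pos_eq by (apply Rlt_le, phi_pos).
  eapply Rle_trans. apply phi_le. apply exp_mono. pose proof (pow2_ge_0 (x + 1)). nra.
  apply exp_tail_down. lra.
Qed.

Definition PsiC := RInt_gen phi (at_point 0) (Rbar_locally p_infty).
Definition PhiC := RInt_gen phi (Rbar_locally m_infty) (at_point 0).
Definition K x := RInt phi 0 x.

Lemma gen_correct (f : R -> R) Fa Fb : ProperFilter Fa -> ProperFilter Fb ->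
  ex_RInt_gen f Fa Fb -> is_RInt_gen f Fa Fb (RInt_gen f Fa Fb).
Proof. intros. apply (RInt_gen_correct (V := R_CompleteNormedModule)); auto. Qed.

Lemma gen_unique (f : R -> R) Fa Fb l : ProperFilter Fa -> ProperFilter Fb ->
  is_RInt_gen f Fa Fb l -> RInt_gen f Fa Fb = l.
Proof. intros. apply (is_RInt_gen_unique (V := R_CompleteNormedModule)); auto. Qed.

Lemma psi_at x : is_RInt_gen phi (at_point x) (Rbar_locally p_infty) (PsiC - K x).
Proof.
  destruct (phi_up_ex x) as [v Hv].
  assert (H : is_RInt_gen phi (at_point 0) (Rbar_locally p_infty) (plus (K x) v)).
  { apply (is_RInt_gen_Chasles (V := R_NormedModule) _ x); auto.
    apply is_RInt_gen_at_point. apply (RInt_correct (V := R_CompleteNormedModule)). apply phi_ex. }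
  apply gen_unique in H. 2: apply at_point_filter. 2: apply Rbar_locally_filter.
  unfold PsiC. rewrite H. unfold plus; simpl. replace (K x + v - K x) with v. exact Hv. unfold Rminus. rewrite Rplus_comm, <- Rplus_assoc, Rplus_opp_l, Rplus_0_l; reflexivity.
Qed.

Lemma phi_at x : is_RInt_gen phi (Rbar_locally m_infty) (at_point x) (PhiC + K x).
Proof.
  destruct (phi_down_ex 0) as [v Hv].
  assert (H : is_RInt_gen phi (Rbar_locally m_infty) (at_point x) (plus v (K x))).
  { apply (is_RInt_gen_Chasles (V := R_NormedModule) _ 0); auto.
    apply is_RInt_gen_at_point. apply (RInt_correct (V := R_CompleteNormedModule)). apply phi_ex. }
  apply gen_unique in Hv. 2: apply Rbar_locally_filter. 2: apply at_point_filter.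
  unfold PhiC. rewrite Hv. exact H.
Qed.

Lemma K_deriv x : is_derive K x (phi x).
Proof.
  apply (is_derive_RInt (V := R_NormedModule) phi K 0 x).
  apply filter_forall. intros; apply (RInt_correct (V := R_CompleteNormedModule)); apply phi_ex.
  apply phi_cont.
Qed.

Lemma K_Derive x : Derive K x = phi x.
Proof. apply is_derive_unique, K_deriv. Qed.

Lemma K_ex_derive x : ex_derive K x.
Proof. eexists; apply K_deriv. Qed.


Definition Gc t mu := exp (t ^ 2 / 2 + mu) * (PhiC + K (- mu / t - t))
                    + exp (t ^ 2 / 2 - mu) * (PsiC - K (t - mu / t)).

Lemma id_down t mu z : phi z * exp (mu + t * z) = exp (t ^ 2 / 2 + mu) * phi (z + - t).
Proof.
  unfold std_normal_pdf, Rdiv.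
  transitivity (exp (- z ^ 2 * / 2 + (mu + t * z)) * / sqrt (2 * PI)).
  rewrite (exp_plus (- z ^ 2 * / 2)); ring.
  transitivity (exp (t ^ 2 * / 2 + mu + - (z + - t) ^ 2 * / 2) * / sqrt (2 * PI)).
  apply Rmult_eq_compat_r; apply f_equal. field.
  rewrite (exp_plus (t ^ 2 * / 2 + mu)); ring.
Qed.

Lemma id_up t mu z : phi z * exp (- (mu + t * z)) = exp (t ^ 2 / 2 - mu) * phi (z + t).
Proof.
  unfold std_normal_pdf, Rdiv.
  transitivity (exp (- z ^ 2 * / 2 + - (mu + t * z)) * / sqrt (2 * PI)).
  rewrite (exp_plus (- z ^ 2 * / 2)); ring.
  transitivity (exp (t ^ 2 * / 2 - mu + - (z + t) ^ 2 * / 2) * / sqrt (2 * PI)).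
  apply Rmult_eq_compat_r; apply f_equal; field.
  rewrite (exp_plus (t ^ 2 * / 2 - mu)); ring.
Qed.

Lemma g_closed t mu : 0 < t ->
  is_RInt_gen (fun z => phi z * ell_exp (mu + t * z))
    (Rbar_locally m_infty) (Rbar_locally p_infty) (Gc t mu).
Proof.
  intros ht. set (z0 := - mu / t). unfold Gc.
  change (is_RInt_gen (fun z => phi z * ell_exp (mu + t * z))
    (Rbar_locally m_infty) (Rbar_locally p_infty)
    (plus (exp (t ^ 2 / 2 + mu) * (PhiC + K (- mu / t - t)))
          (exp (t ^ 2 / 2 - mu) * (PsiC - K (t - mu / t))))).
  apply (is_RInt_gen_Chasles (V := R_NormedModule) _ z0).
  - pose proof (gen_shift_down phi (z0 - t) (- t) _ phi_ex (phi_at (z0 - t))) as H.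
    replace (z0 - t - - t) with z0 in H by ring.
    apply (is_RInt_gen_scal (V := R_NormedModule) _ (exp (t ^ 2 / 2 + mu))) in H.
    eapply is_RInt_gen_ext. 2: exact H.
    apply fp_strict. apply Rbar_locally_filter. apply at_point_filter.
    apply fp_down. intros x hx. unfold scal; simpl; unfold mult; simpl.
    unfold ell_exp. rewrite Rabs_left1. rewrite Ropp_involutive, id_down. reflexivity.
    unfold z0 in hx. apply (Rmult_le_compat_l t) in hx; [|lra].
    replace (t * (- mu / t)) with (- mu) in hx by (field; lra). lra.
  - pose proof (gen_shift_up phi (z0 + t) t _ phi_ex (psi_at (z0 + t))) as H.
    replace (z0 + t - t) with z0 in H by ring.
    apply (is_RInt_gen_scal (V := R_NormedModule) _ (exp (t ^ 2 / 2 - mu))) in H.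
    replace (t - mu / t) with (z0 + t) by (unfold z0; unfold Rdiv; ring).
    eapply is_RInt_gen_ext. 2: exact H.
    apply fp_strict. apply at_point_filter. apply Rbar_locally_filter.
    apply fp_up. intros x hx. unfold scal; simpl; unfold mult; simpl.
    unfold ell_exp. rewrite Rabs_pos_eq. rewrite id_up. reflexivity.
    unfold z0 in hx. apply (Rmult_le_compat_l t) in hx; [|lra].
    replace (t * (- mu / t)) with (- mu) in hx by (field; lra). lra.
Qed.

Lemma idA t mu : t <> 0 -> phi (- mu / t - t) = phi (mu / t) / exp (t ^ 2 / 2 + mu).
Proof.
  intros ht. unfold std_normal_pdf.
  assert (E : exp (- (- mu / t - t) ^ 2 / 2) = exp (- (mu / t) ^ 2 / 2) * / exp (t ^ 2 / 2 + mu)).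
  { rewrite <- exp_Ropp, <- exp_plus. apply f_equal. field; auto. }
  rewrite E. pose proof sq2pi_pos. pose proof (exp_pos (t ^ 2 / 2 + mu)). pose proof (exp_pos (t ^ 2 / 2 - mu)). field. lra.
Qed.

Lemma idB t mu : t <> 0 -> phi (t - mu / t) = phi (mu / t) / exp (t ^ 2 / 2 - mu).
Proof.
  intros ht. unfold std_normal_pdf.
  assert (E : exp (- (t - mu / t) ^ 2 / 2) = exp (- (mu / t) ^ 2 / 2) * / exp (t ^ 2 / 2 - mu)).
  { rewrite <- exp_Ropp, <- exp_plus. apply f_equal. field; auto. }
  rewrite E. pose proof sq2pi_pos. pose proof (exp_pos (t ^ 2 / 2 + mu)). pose proof (exp_pos (t ^ 2 / 2 - mu)). field. lra.
Qed.

Lemma Gc_deriv s mu : 0 < s -> is_derive (fun t => Gc t mu) s (s * Gc s mu - 2 * phi (mu / s)).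
Proof.
  intros hs. unfold Gc.
  auto_derive.
  - repeat split; try apply K_ex_derive; lra.
  - rewrite !K_Derive. 
    replace (- mu * / s + - s) with (- mu / s - s) by (unfold Rdiv, Rminus; ring).
    replace (s + - (mu * / s)) with (s - mu / s) by (unfold Rdiv, Rminus; ring).
    replace (s * (s * 1) * / 2 + mu) with (s ^ 2 / 2 + mu) by (unfold Rdiv; ring).
    replace (s * (s * 1) * / 2 + - mu) with (s ^ 2 / 2 - mu) by (unfold Rdiv, Rminus; ring).
    rewrite idA, idB by lra.
    pose proof (exp_pos (s ^ 2 / 2 + mu)). pose proof (exp_pos (s ^ 2 / 2 - mu)).
    field. lra.
Qed.


Lemma ell_cont a b z : continuous (fun z => ell_exp (a + b * z)) z.
Proof.
  unfold ell_exp. apply continuous_exp_comp.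
  apply (continuous_opp (K := R_AbsRing) (V := R_NormedModule) (fun z => Rabs (a + b * z))).
  apply continuous_Rabs_comp.
  apply (@ex_derive_continuous R_AbsRing R_NormedModule). auto_derive. auto.
Qed.

Lemma h_cont s d z : continuous (fun z => phi z * ell_exp (d + s * z)) z.
Proof.
  apply (continuous_mult (K := R_AbsRing) phi (fun z => ell_exp (d + s * z))).
  apply phi_cont. apply ell_cont.
Qed.

Lemma ell_bounds x : 0 < ell_exp x <= 1.
Proof.
  unfold ell_exp. split. apply exp_pos. rewrite <- exp_0. apply exp_mono.
  pose proof (Rabs_pos x); lra.
Qed.

Definition Cphi := PhiC + PsiC.

Lemma phi_R : is_RInt_gen phi (Rbar_locally m_infty) (Rbar_locally p_infty) Cphi.
Proof.
  replace Cphi with (plus (PhiC + K 0) (PsiC - K 0)) by (unfold plus, Cphi; simpl; ring).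
  apply (is_RInt_gen_Chasles (V := R_NormedModule) _ 0). apply phi_at. apply psi_at.
Qed.

Lemma g_sig_eq t mu : 0 < t -> g_sig t mu = Gc t mu.
Proof.
  intros ht. unfold g_sig, int_R. apply gen_unique.
  apply Rbar_locally_filter. apply Rbar_locally_filter. apply g_closed; auto.
Qed.

Lemma Gc_bounds s mu : 0 < s -> 0 <= Gc s mu <= Cphi.
Proof.
  intros hs. pose proof (g_closed s mu hs) as H. split.
  - eapply gen_nonneg. 4: exact H. apply Rbar_locally_filter. apply Rbar_locally_filter.
    apply fp_R. intros x. pose proof (phi_pos x). pose proof (ell_bounds (mu + s * x)). nra.
  - apply (gen_le (fun z => phi z * ell_exp (mu + s * z)) phi _ _ _ _ (Rbar_locally_filter m_infty) (Rbar_locally_filter p_infty)); [|exact H|apply phi_R].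
    apply fp_R. intros x. pose proof (phi_pos x). pose proof (ell_bounds (mu + s * x)). nra.
Qed.

Lemma Gc_cont s mu : 0 < s -> continuous (fun m => Gc s m) mu.
Proof.
  intros hs. apply (@ex_derive_continuous R_AbsRing R_NormedModule). unfold Gc.
  auto_derive. repeat split; try apply K_ex_derive; lra.
Qed.

Lemma dG s mu : 0 < s -> Derive (fun t => g_sig t mu) s = s * Gc s mu - 2 * phi (mu / s).
Proof.
  intros hs. rewrite (Derive_ext_loc _ (fun t => Gc t mu)).
  apply is_derive_unique, Gc_deriv; auto.
  exists (mkposreal s hs). intros t Ht. apply g_sig_eq.
  unfold ball in Ht; simpl in Ht; unfold AbsRing_ball, abs, minus, plus, opp in Ht; simpl in Ht.
  apply Rabs_lt_between in Ht. lra.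
Qed.

Lemma num1 : 1 / 11 <= 2 * (exp (- (1/2)) * exp (- 1)) / sqrt (2 * PI).
Proof.
  rewrite <- exp_plus. replace (- (1/2) + - 1) with (- (3/2)) by field.
  rewrite exp_Ropp.
  assert (E3 : exp (3/2) * exp (3/2) <= 27).
  { rewrite <- exp_plus. replace (3/2 + 3/2) with (1 + 1 + 1) by field.
    rewrite !exp_plus. pose proof exp_le_3. pose proof (exp_pos 1). 
    assert (exp 1 * exp 1 <= 9) by nra. nra. }
  assert (S3 : sqrt (2 * PI) <= 3).
  { rewrite <- (sqrt_square 3) by lra. apply sqrt_le_1_alt. pose proof PI_4. lra. }
  pose proof sq2pi_pos. pose proof (exp_pos (3/2)).
  assert (exp (3/2) <= 6) by nra.
  apply Rmult_le_reg_r with (sqrt (2 * PI) * exp (3/2) * 11). 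
  apply Rmult_lt_0_compat. apply Rmult_lt_0_compat; auto. lra.
  unfold Rdiv. field_simplify; try lra. nra.
Qed.

Lemma Gc_lower s d : 0 < s -> s <= 1 -> exp (- Rabs d) / 11 <= Gc s d.
Proof.
  intros hs hs1.
  set (h := fun z => phi z * ell_exp (d + s * z)).
  assert (hex : forall a b, ex_RInt h a b) by (apply exR_cont; intros; apply h_cont).
  assert (hdom : forall x, Rabs (h x) <= phi x).
  { intros x; unfold h. pose proof (phi_pos x). pose proof (ell_bounds (d + s * x)).
    rewrite Rabs_pos_eq; nra. }
  destruct (dom_ex h phi (Rbar_locally m_infty) (at_point (-1)) _ (Rbar_locally_filter _) (at_point_filter _) hex phi_ex
     (fp_all _ _ _ _ _ (fun ab x _ => hdom x))
     (gen_correct _ _ _ (Rbar_locally_filter _) (at_point_filter _) (phi_down_ex (-1)))) as [l1 H1].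
  destruct (dom_ex h phi (at_point 1) (Rbar_locally p_infty) _ (at_point_filter _) (Rbar_locally_filter _) hex phi_ex
     (fp_all _ _ _ _ _ (fun ab x _ => hdom x))
     (gen_correct _ _ _ (at_point_filter _) (Rbar_locally_filter _) (phi_up_ex 1))) as [l3 H3].
  assert (H : is_RInt_gen h (Rbar_locally m_infty) (Rbar_locally p_infty) (plus l1 (plus (RInt h (-1) 1) l3))).
  { apply (is_RInt_gen_Chasles (V := R_NormedModule) _ (-1)); auto.
    apply (is_RInt_gen_Chasles (V := R_NormedModule) _ 1); auto.
    apply is_RInt_gen_at_point. apply (RInt_correct (V := R_CompleteNormedModule)). apply hex. }
  assert (E : Gc s d = plus l1 (plus (RInt h (-1) 1) l3)).
  { pose proof (g_closed s d hs) as G. fold h in G.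
    apply gen_unique in G. apply gen_unique in H. congruence.
    all: apply Rbar_locally_filter. }
  rewrite E. unfold plus; simpl.
  assert (P1 : 0 <= l1).
  { eapply gen_nonneg. 4: exact H1. apply Rbar_locally_filter. apply at_point_filter.
    apply fp_down. intros x _. pose proof (Rabs_pos (h x)). pose proof (hdom x).
    unfold h. pose proof (phi_pos x). pose proof (ell_bounds (d + s * x)). nra. }
  assert (P3 : 0 <= l3).
  { eapply gen_nonneg. 4: exact H3. apply at_point_filter. apply Rbar_locally_filter.
    apply fp_up. intros x _. unfold h. pose proof (phi_pos x). pose proof (ell_bounds (d + s * x)). nra. }
  set (c := exp (- (1/2)) / sqrt (2 * PI) * (exp (- Rabs d) * exp (- 1))).
  assert (P2 : RInt (fun _ => c) (-1) 1 <= RInt h (-1) 1).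
  { apply RInt_le. lra. apply exR_cont; intros; apply continuous_const. apply hex.
    intros x Hx. unfold h, c. apply Rmult_le_compat.
    - apply Rlt_le, Rdiv_lt_0_compat. apply exp_pos. apply sq2pi_pos.
    - apply Rlt_le, Rmult_lt_0_compat; apply exp_pos.
    - unfold std_normal_pdf. unfold Rdiv. apply Rmult_le_compat_r.
      apply Rlt_le, Rinv_0_lt_compat, sq2pi_pos. apply exp_mono.
      assert (x ^ 2 <= 1) by nra. lra.
    - unfold ell_exp. rewrite <- exp_plus. apply exp_mono.
      assert (Rabs (d + s * x) <= Rabs d + 1).
      { eapply Rle_trans. apply Rabs_triang. rewrite Rabs_mult, (Rabs_pos_eq s) by lra.
        assert (Rabs x <= 1) by (apply Rabs_le; lra). nra. }
      lra. }
  rewrite RInt_const in P2. unfold scal in P2; simpl in P2; unfold mult in P2; simpl in P2.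
  pose proof num1. pose proof (exp_pos (- Rabs d)).
  assert (exp (- Rabs d) / 11 <= (1 - -1) * c).
  { unfold c. replace ((1 - -1) * (exp (- (1 / 2)) / sqrt (2 * PI) * (exp (- Rabs d) * exp (-1))))
      with (exp (- Rabs d) * (2 * (exp (- (1/2)) * exp (- 1)) / sqrt (2 * PI))).
    replace (exp (- Rabs d) / 11) with (exp (- Rabs d) * (1/11)) by field. apply Rmult_le_compat_l; lra.
    pose proof sq2pi_pos. field. lra. }
  lra.
Qed.


Lemma mvt' (f df : R -> R) : (forall x, is_derive f x (df x)) ->
  forall a b, exists c, Rmin a b <= c <= Rmax a b /\ f b - f a = df c * (b - a).
Proof.
  intros H a b. apply MVT_gen. intros; apply H.
  intros x _. apply continuity_pt_filterlim.
  apply (@ex_derive_continuous R_AbsRing R_NormedModule). eexists; apply H.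
Qed.

Lemma taylor_lower (h : R -> R) (c : R) :
  (forall x, ex_derive h x) -> (forall x, ex_derive (Derive h) x) ->
  (forall x, c <= Derive (Derive h) x) ->
  forall x, h 0 + Derive h 0 * x + c * x ^ 2 / 2 <= h x.
Proof.
  intros H1 H2 H3.
  set (k1 := fun x => Derive h x - Derive h 0 - c * x).
  assert (Dk1 : forall x, is_derive k1 x (Derive (Derive h) x - c)).
  { intros x. unfold k1. auto_derive. apply H2. change (Derive (fun x0 : R => Derive h x0) x) with (Derive (Derive h) x); ring. }
  assert (Mk1 : forall x y, x <= y -> k1 x <= k1 y).
  { intros x y Hxy. destruct (mvt' k1 _ Dk1 x y) as [z [_ Hz]]. specialize (H3 z). nra. }
  assert (K10 : k1 0 = 0) by (unfold k1; ring).
  set (k := fun x => h x - h 0 - Derive h 0 * x - c * x ^ 2 / 2).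
  assert (Dk : forall x, is_derive k x (k1 x)).
  { intros x. unfold k, k1. auto_derive. apply H1. change (Derive (fun x0 : R => h x0) x) with (Derive h x); field. }
  intros x. destruct (mvt' k _ Dk 0 x) as [z [Hz E]].
  assert (0 <= k x - k 0).
  { rewrite E. unfold Rmin, Rmax in Hz. destruct (Rle_dec 0 x).
    - pose proof (Mk1 0 z ltac:(lra)). nra.
    - pose proof (Mk1 z 0 ltac:(lra)). nra. }
  unfold k in H. simpl in H. lra.
Qed.

Lemma taylor_upper (h : R -> R) (c : R) :
  (forall x, ex_derive h x) -> (forall x, ex_derive (Derive h) x) ->
  (forall x, Derive (Derive h) x <= c) ->
  forall x, h x <= h 0 + Derive h 0 * x + c * x ^ 2 / 2.
Proof.
  intros H1 H2 H3 x.
  set (g := fun y => - h y).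
  assert (Dg : forall y, Derive g y = - Derive h y).
  { intros y; unfold g. apply is_derive_unique. apply (is_derive_opp (K := R_AbsRing) (V := R_NormedModule)), Derive_correct, H1. }
  assert (DDg : forall y, Derive (Derive g) y = - Derive (Derive h) y).
  { intros y. rewrite (Derive_ext _ _ _ Dg). apply is_derive_unique.
    apply (is_derive_opp (K := R_AbsRing) (V := R_NormedModule)), Derive_correct, H2. }
  pose proof (taylor_lower g (- c)) as T.
  assert (forall x, ex_derive g x).
  { intros y; unfold g. apply (ex_derive_opp (K := R_AbsRing) (V := R_NormedModule)); auto. }
  assert (forall x, ex_derive (Derive g) x).
  { intros y. apply (ex_derive_ext (fun y => - Derive h y)). intros; symmetry; apply Dg.
    apply (ex_derive_opp (K := R_AbsRing) (V := R_NormedModule)); auto. }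
  specialize (T H H0). assert (forall x, - c <= Derive (Derive g) x) by (intros; rewrite DDg; specialize (H3 x0); lra).
  specialize (T H4 x). rewrite Dg in T. unfold g in T. lra.
Qed.


Theorem lemma9 (p : R -> R) (nu rho sigma : R)
  (Hnu : 0 < nu) (Hnurho : nu <= rho) (Hsigma : 0 < sigma)
  (Hp_pos : forall x, 0 < p x)
  (Hp_int : is_RInt_gen p (Rbar_locally m_infty) (Rbar_locally p_infty) 1)
  (Hlogp_d1 : forall x, ex_derive (fun y => ln (p y)) x)
  (Hlogp_d2 : forall x, ex_derive (Derive (fun y => ln (p y))) x)
  (Hlogp_bd : forall x, - rho <= Derive_n (fun y => ln (p y)) 2 x <= - nu)
  (Hsig_small : sigma <= 4 * sqrt 2 / sqrt PI)
  (Hgamma : gamma_star sigma <= Rmin 1 (1 / (4 * sqrt rho))) :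
  dL_dsigma p sigma >=
    p 0 * (sigma / 11 *
             int_0_inf (fun d => exp ((Rabs (score p 0) - sqrt rho / 4 - 1) * d
                                      - rho / 2 * d ^ 2))
           - 2 * sqrt 2 * exp (score p 0 ^ 2 / (nu + / sigma ^ 2))
             * (1 / sqrt (nu + / sigma ^ 2))).
Proof.
  set (hL := fun y => ln (p y)).
  assert (Hrho : 0 < rho) by lra.
  assert (Hs1 : sigma <= 1).
  { unfold gamma_star in Hgamma.
    pose proof (sqrt_pos (2 * ln (4 * sqrt 2 / (sqrt PI * sigma)))).
    assert (Rmin 1 (1 / (4 * sqrt rho)) <= 1) by apply Rmin_l.
    assert (sigma ^ 2 <= 1) by nra. nra. }
  assert (Pe : forall x, p x = exp (hL x)) by (intros; unfold hL; rewrite exp_ln; auto).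
  assert (p_der : forall x, is_derive p x (p x * Derive hL x)).
  { intros x. apply (is_derive_ext (fun y => exp (hL y))). intros; symmetry; apply Pe.
    rewrite Pe. auto_derive. apply Hlogp_d1. change (Derive (fun x0 : R => hL x0) x) with (Derive hL x). ring. }
  assert (p_cont : forall x, continuous p x).
  { intros x. apply (@ex_derive_continuous R_AbsRing R_NormedModule). eexists; apply p_der. }
  set (s0 := score p 0).
  assert (Hs0 : s0 = Derive hL 0).
  { unfold s0, score. rewrite (is_derive_unique _ _ _ (p_der 0)). field. pose proof (Hp_pos 0); lra. }
  set (p0 := p 0).
  assert (Hp0 : 0 < p0) by apply Hp_pos.
  assert (lowp : forall x, p0 * exp (s0 * x - rho / 2 * x ^ 2) <= p x).
  { intros x. pose proof (taylor_lower hL (- rho) Hlogp_d1 Hlogp_d2 (fun x => proj1 (Hlogp_bd x)) x) as T.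
    rewrite Pe. unfold p0. rewrite Pe, <- exp_plus. apply exp_mono. rewrite Hs0. lra. }
  assert (upp : forall x, p x <= p0 * exp (s0 * x - nu / 2 * x ^ 2)).
  { intros x. pose proof (taylor_upper hL (- nu) Hlogp_d1 Hlogp_d2 (fun x => proj2 (Hlogp_bd x)) x) as T.
    rewrite Pe. unfold p0. rewrite Pe, <- exp_plus. apply exp_mono. rewrite Hs0. lra. }
  assert (Hsq : forall x, 0 <= sqrt x) by apply sqrt_pos.
  set (hg := fun mu => p mu * Gc sigma mu).
  set (hf := fun mu => p mu * phi (mu / sigma)).
  assert (hg_ex : forall a b, ex_RInt hg a b).
  { apply exR_cont. intros x. apply (continuous_mult (K := R_AbsRing) p (fun m => Gc sigma m)).
    apply p_cont. apply Gc_cont; auto. }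
  assert (hf_ex : forall a b, ex_RInt hf a b).
  { apply exR_cont. intros x. apply (continuous_mult (K := R_AbsRing) p (fun m => phi (m / sigma))).
    apply p_cont. apply (continuous_comp (fun m => m / sigma) phi). 
    apply (@ex_derive_continuous R_AbsRing R_NormedModule). auto_derive. lra. apply phi_cont. }
  assert (p_ex : forall a b, ex_RInt p a b) by (apply exR_cont; auto).
  assert (domg : forall x, Rabs (hg x) <= scal Cphi (p x)).
  { intros x. unfold hg, scal; simpl; unfold mult; simpl. pose proof (Gc_bounds sigma x Hsigma). pose proof (Hp_pos x).
    rewrite Rabs_pos_eq; nra. }
  assert (domf : forall x, Rabs (hf x) <= p x).
  { intros x. unfold hf. pose proof (phi_pos (x / sigma)). pose proof (phi_le1 (x / sigma)). pose proof (Hp_pos x).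
    rewrite Rabs_pos_eq; nra. }
  assert (sc_ex : forall a b, ex_RInt (fun y => scal Cphi (p y)) a b).
  { apply exR_cont; intros; apply (continuous_scal_r (K := R_AbsRing) Cphi p); auto. }
  destruct (dom_ex hg (fun y => scal Cphi (p y)) _ _ _ (Rbar_locally_filter _) (Rbar_locally_filter _) hg_ex
     sc_ex (fp_all _ _ _ _ _ (fun ab x _ => domg x))
     (is_RInt_gen_scal _ Cphi _ Hp_int)) as [Lg HLg].
  destruct (dom_ex hf p _ _ _ (Rbar_locally_filter _) (Rbar_locally_filter _) hf_ex p_ex
     (fp_all _ _ _ _ _ (fun ab x _ => domf x)) Hp_int) as [Lf HLf].
  assert (HD : is_RInt_gen (fun mu => p mu * Derive (fun t => g_sig t mu) sigma)
                 (Rbar_locally m_infty) (Rbar_locally p_infty) (sigma * Lg - 2 * Lf)).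
  { pose proof (is_RInt_gen_minus _ _ _ _ (is_RInt_gen_scal _ sigma _ HLg) (is_RInt_gen_scal _ 2 _ HLf)) as H.
    eapply is_RInt_gen_ext. 2: exact H. apply fp_all; try apply Rbar_locally_filter. intros ab x _.
    rewrite dG by auto. unfold hg, hf, minus, plus, opp, scal; simpl; unfold mult; simpl. ring. }
  assert (EdL : dL_dsigma p sigma = sigma * Lg - 2 * Lf).
  { unfold dL_dsigma, int_R. apply gen_unique; auto; apply Rbar_locally_filter. }
  rewrite EdL.
  set (A := Rabs s0 - sqrt rho / 4 - 1).
  set (F := fun d => exp (A * d - rho / 2 * d ^ 2)).
  assert (F_ex : forall a b, ex_RInt F a b).
  { apply exR_cont. intros x. apply (@ex_derive_continuous R_AbsRing R_NormedModule). unfold F. auto_derive. auto. }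
  set (C := (A + 1) ^ 2 / (2 * rho)).
  assert (F_dom : forall x, Rabs (F x) <= exp (C - 1 * (x - 0))).
  { intros x. unfold F. rewrite Rabs_pos_eq by (apply Rlt_le, exp_pos). apply exp_mono.
    assert (E : C - 1 * (x - 0) - (A * x - rho / 2 * x ^ 2) = rho / 2 * (x - (A + 1) / rho) ^ 2)
      by (unfold C; field; lra).
    pose proof (pow2_ge_0 (x - (A + 1) / rho)). nra. }
  assert (IFex : ex_RInt_gen F (at_point 0) (Rbar_locally p_infty)).
  { apply (dom_ex F (fun x => exp (C - 1 * (x - 0))) _ _ (exp C / 1) (at_point_filter _) (Rbar_locally_filter _) F_ex).
    apply exR_cont; intros x. eapply continuous_ext. 2: apply (cont_expaff C (-1)). intros; simpl; f_equal; ring.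
    apply fp_all; try apply at_point_filter; try apply Rbar_locally_filter. intros ab x _; apply F_dom.
    apply exp_tail_up; lra. }
  set (I := int_0_inf F).
  assert (HI : is_RInt_gen F (at_point 0) (Rbar_locally p_infty) I).
  { apply gen_correct; auto. apply at_point_filter. apply Rbar_locally_filter. }
  assert (key : forall x, p0 / 11 * exp (s0 * x - rho / 2 * x ^ 2 - Rabs x) <= hg x).
  { intros x. unfold hg. pose proof (lowp x). pose proof (Gc_lower sigma x Hsigma Hs1).
    unfold Rminus at 1. rewrite exp_plus.
    pose proof (exp_pos (s0 * x - rho / 2 * x ^ 2)). pose proof (exp_pos (- Rabs x)).
    replace (p0 / 11 * (exp (s0 * x - rho / 2 * x ^ 2) * exp (- Rabs x)))
      with ((p0 * exp (s0 * x - rho / 2 * x ^ 2)) * (exp (- Rabs x) / 11)) by field.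
    apply Rmult_le_compat; auto; try nra. }
  assert (hg_pos : forall x, 0 <= hg x).
  { intros x. unfold hg. pose proof (Gc_bounds sigma x Hsigma). pose proof (Hp_pos x). nra. }
  assert (LB : p0 / 11 * I <= Lg).
  { destruct (Rle_or_lt 0 s0) as [Hs|Hs].
    - set (q := fun x => if Rle_dec 0 x then p0 / 11 * F x else 0).
      assert (Hq : is_RInt_gen q (Rbar_locally m_infty) (Rbar_locally p_infty) (plus 0 (p0 / 11 * I))).
      { apply (is_RInt_gen_Chasles (V := R_NormedModule) _ 0).
        - eapply is_RInt_gen_ext. 2: apply gen_zero; [apply Rbar_locally_filter | apply at_point_filter].
          apply fp_down_s. intros x hx. unfold q. destruct (Rle_dec 0 x). lra. reflexivity.
        - eapply is_RInt_gen_ext. 2: apply (is_RInt_gen_scal _ (p0 / 11) _ HI).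
          apply fp_up_s. intros x hx. unfold q. destruct (Rle_dec 0 x). reflexivity. lra. }
      assert (Pq : forall x, q x <= hg x).
      2: { assert (T := gen_le q hg _ _ _ _ (Rbar_locally_filter _) (Rbar_locally_filter _)
        (fp_R _ Pq) Hq HLg).
      unfold plus in T; simpl in T. lra. }
      intros x. unfold q. destruct (Rle_dec 0 x) as [hx|hx]; [|apply hg_pos].
      eapply Rle_trans; [|apply key]. apply Rmult_le_compat_l. lra.
      unfold F; apply exp_mono. unfold A. rewrite (Rabs_pos_eq s0), (Rabs_pos_eq x) by lra.
      pose proof (Hsq rho). nra.
    - set (q := fun x => if Rle_dec x 0 then p0 / 11 * F (- x) else 0).
      assert (Hq : is_RInt_gen q (Rbar_locally m_infty) (Rbar_locally p_infty) (plus (p0 / 11 * I) 0)).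
      { apply (is_RInt_gen_Chasles (V := R_NormedModule) _ 0).
        - eapply is_RInt_gen_ext. 2: apply (is_RInt_gen_scal _ (p0 / 11) _ (gen_refl F I F_ex HI)).
          apply fp_down_s. intros x hx. unfold q. destruct (Rle_dec x 0). reflexivity. lra.
        - eapply is_RInt_gen_ext. 2: apply gen_zero; [apply at_point_filter | apply Rbar_locally_filter].
          apply fp_up_s. intros x hx. unfold q. destruct (Rle_dec x 0). lra. reflexivity. }
      assert (Pq : forall x, q x <= hg x).
      2: { assert (T := gen_le q hg _ _ _ _ (Rbar_locally_filter _) (Rbar_locally_filter _)
        (fp_R _ Pq) Hq HLg).
      unfold plus in T; simpl in T. lra. }
      intros x. unfold q. destruct (Rle_dec x 0) as [hx|hx]; [|apply hg_pos].
      eapply Rle_trans; [|apply key]. apply Rmult_le_compat_l. lra.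
      unfold F; apply exp_mono. unfold A. rewrite (Rabs_left s0), (Rabs_left1 x) by lra.
      pose proof (Hsq rho). nra. }
  set (a := nu + / sigma ^ 2).
  assert (ha : 0 < a).
  { unfold a. pose proof (pow_lt sigma 2 Hsigma). pose proof (Rinv_0_lt_compat _ H). lra. }
  set (k := sqrt a). assert (hk : 0 < k) by (apply sqrt_lt_R0; auto).
  assert (hkk : k * k = a) by (apply sqrt_sqrt; lra).
  set (m := s0 / a). set (c0 := s0 ^ 2 / (2 * a) + 1 / 2).
  set (U := fun x => scal (p0 / sqrt (2 * PI)) (exp (c0 - k * Rabs (x - m)))).
  assert (HU : is_RInt_gen U (Rbar_locally m_infty) (Rbar_locally p_infty)
                 (scal (p0 / sqrt (2 * PI)) (2 * exp c0 / k))).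
  { unfold U. apply (is_RInt_gen_scal (V := R_NormedModule) (fun x => exp (c0 - k * Rabs (x - m))) (p0 / sqrt (2 * PI)) (2 * exp c0 / k)).
    apply exp_abs_int; auto. }
  assert (Pf : forall x, hf x <= U x).
  { intros x. unfold hf, U, scal; simpl; unfold mult; simpl.
    pose proof (upp x). pose proof (phi_pos (x / sigma)).
    apply Rle_trans with (p0 * exp (s0 * x - nu / 2 * x ^ 2) * phi (x / sigma)).
    apply Rmult_le_compat_r; lra.
    unfold std_normal_pdf. pose proof sq2pi_pos.
    replace (p0 * exp (s0 * x - nu / 2 * x ^ 2) * (exp (- (x / sigma) ^ 2 / 2) / sqrt (2 * PI)))
      with (p0 / sqrt (2 * PI) * exp (s0 * x - nu / 2 * x ^ 2 + - (x / sigma) ^ 2 / 2))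
      by (rewrite exp_plus; field; lra).
    apply Rmult_le_compat_l. apply Rlt_le, Rdiv_lt_0_compat; auto.
    apply exp_mono.
    assert (E1 : nu / 2 * x ^ 2 + (x / sigma) ^ 2 / 2 = a / 2 * x ^ 2) by (unfold a; field; lra).
    assert (E2 : s0 ^ 2 / (2 * a) - a / 2 * (x - m) ^ 2 = s0 * x - a / 2 * x ^ 2) by (unfold m; field; lra).
    assert (E : s0 * x - nu / 2 * x ^ 2 + - (x / sigma) ^ 2 / 2 = s0 ^ 2 / (2 * a) - a / 2 * (x - m) ^ 2) by lra.
    rewrite E. unfold c0.
    assert (Q : (k * Rabs (x - m)) ^ 2 = a * (x - m) ^ 2).
    { rewrite Rpow_mult_distr, pow2_abs, <- hkk. ring. }
    pose proof (pow2_ge_0 (k * Rabs (x - m) - 1)).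
    assert (Q2 : (k * Rabs (x - m) - 1) ^ 2 = (k * Rabs (x - m)) ^ 2 - 2 * (k * Rabs (x - m)) + 1) by ring.
    assert (Q3 : a / 2 * (x - m) ^ 2 = (a * (x - m) ^ 2) / 2) by field.
    rewrite Q3. rewrite <- Q. lra. }
  assert (UB : Lf <= p0 / sqrt (2 * PI) * (2 * exp c0 / k)).
  { apply (gen_le hf U _ _ _ _ (Rbar_locally_filter _) (Rbar_locally_filter _) (fp_R _ Pf) HLf HU). }
  assert (N1 : exp c0 <= sqrt PI * exp (s0 ^ 2 / a)).
  { unfold c0. rewrite exp_plus, Rmult_comm. apply Rmult_le_compat.
    apply Rlt_le, exp_pos. apply Rlt_le, exp_pos.
    rewrite <- (sqrt_square (exp (1/2))) by (apply Rlt_le, exp_pos).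
    apply sqrt_le_1_alt. rewrite <- exp_plus. replace (1/2 + 1/2) with 1 by field.
    pose proof exp_le_3. pose proof PI_gt3. lra.
    apply exp_mono. assert (0 <= s0 ^ 2 / a) by (apply Rdiv_le_0_compat; [apply pow2_ge_0|auto]).
    replace (s0 ^ 2 / (2 * a)) with ((s0 ^ 2 / a) / 2) by (field; lra). lra. }
  assert (S2 : sqrt 2 * sqrt (2 * PI) = 2 * sqrt PI).
  { rewrite <- sqrt_mult by (pose proof PI_gt3; lra).
    replace (2 * (2 * PI)) with ((2 * 2) * PI) by ring.
    rewrite sqrt_mult by (pose proof PI_gt3; lra). rewrite sqrt_square; lra. }
  assert (Fin : 2 * Lf <= p0 * (2 * sqrt 2 * exp (s0 ^ 2 / a) * (1 / k))).
  { pose proof sq2pi_pos. pose proof (exp_pos c0).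
    apply Rle_trans with (2 * (p0 / sqrt (2 * PI) * (2 * exp c0 / k))). lra.
    replace (2 * (p0 / sqrt (2 * PI) * (2 * exp c0 / k))) with ((p0 / k) * (4 * exp c0 / sqrt (2 * PI))) by (field; lra).
    replace (p0 * (2 * sqrt 2 * exp (s0 ^ 2 / a) * (1 / k))) with ((p0 / k) * (2 * sqrt 2 * exp (s0 ^ 2 / a))) by (field; lra).
    apply Rmult_le_compat_l. apply Rlt_le, Rdiv_lt_0_compat; auto.
    apply Rle_trans with (4 * (sqrt PI * exp (s0 ^ 2 / a)) / sqrt (2 * PI)).
    { unfold Rdiv; apply Rmult_le_compat_r; [apply Rlt_le, Rinv_0_lt_compat; auto | lra]. }
    right. replace (sqrt PI) with (sqrt 2 * sqrt (2 * PI) / 2) by lra. field. lra. }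
  apply Rle_ge. 
  assert (sigma * (p0 / 11 * I) <= sigma * Lg) by (apply Rmult_le_compat_l; lra).
  replace (p0 * (sigma / 11 * I - 2 * sqrt 2 * exp (s0 ^ 2 / a) * (1 / k)))
    with (sigma * (p0 / 11 * I) - p0 * (2 * sqrt 2 * exp (s0 ^ 2 / a) * (1 / k))) by (field; lra).
  lra.
Qed.
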